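(* Under Assumptions 1–4 below, with $\tau\in(0,1]$ and $p\in(0,1]$, the iterates of Algorithm 2Direction satisfy, for every $t\ge0$, $$\begin{aligned}\mathbb E_t\|v^{t+1}-\nabla f(z^{t+1})\|^2&\le\Big(1-\frac\tau2\Big)\|v^t-\nabla f(z^t)\|^2+\frac{2\tau^2\omega}{n^2}\sum_{i=1}^n\|h_i^t-\nabla f_i(z^t)\|^2\\&\quad+\Big(4p\Big(1+\frac{2p}{\tau}\Big)L+\frac{8p\tau^2\omega L_{\max}}{n}\Big)D_f(z^t,y^{t+1})+\Big(2p\Big(1+\frac{2p}{\tau}\Big)L^2+\frac{4p\tau^2\omega\widehat L^2}{n}\Big)\mathbb E_t\|x^{t+1}-y^{t+1}\|^2,\end{aligned}$$ where $D_f(x,y)=f(x)-f(y)-\langle\nabla f(y),x-y\rangle$.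
   Context: Setting: $f=\frac1n\sum_{i=1}^nf_i$, $f_i:\mathbb R^d\to\mathbb R$. Assumption 1: each $f_i$ is $L_i$-smooth, $L_{\max}=\max_iL_i$, and $\widehat L>0$ satisfies $\frac1n\sum_i\|\nabla f_i(x)-\nabla f_i(y)\|^2\le\widehat L^2\|x-y\|^2$ for all $x,y$. Assumption 2: $f$ is $L$-smooth. Assumption 3: each $f_i$ is convex and $f$ is $\mu$-strongly convex ($\mu\ge0$) with minimizer $x^*$. Assumption 4: the randomness of all compressors is drawn independently (of each other, of the coins $c^t$, and of the past). Compressor classes: $\mathbb U(\omega)$ ($\omega\ge0$) = stochastic maps $\mathcal C$ with $\mathbb E\mathcal C(x)=x$, $\mathbb E\|\mathcal C(x)-x\|^2\le\omega\|x\|^2$; $\mathbb B(\alpha)$ ($\alpha\in(0,1]$) = possibly stochastic maps with $\mathbb E\|\mathcal C(x)-x\|^2\le(1-\alpha)\|x\|^2$. Algorithm 2Direction: compressors $\mathcal C_i^{D,y},\mathcal C_i^{D,z}\in\mathbb U(\omega)$ (workers), $\mathcal C^P\in\mathbb B(\alpha)$ (server); parameters $\bar L>0$, $\mu\ge0$, $p\in(0,1]$, $\Gamma_0\ge1$, $\tau\in(0,1]$, $x^0,h_1^0,\dots,h_n^0,k^0,v^0\in\mathbb R^d$. Set $\beta=1/(\omega+1)$, $w^0=z^0=u^0=x^0$, $h^0=\frac1n\sum_ih_i^0$, $\theta_{\min}=\frac14\min\{1,\alpha/p,\tau/p,\beta/p\}$. For $t=0,1,\dots$: let $\bar\theta_{t+1}$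 be the largest root of $p\bar L\Gamma_t\theta^2+p(\bar L+\Gamma_t\mu)\theta-(\bar L+\Gamma_t\mu)=0$, $\theta_{t+1}=\min\{\bar\theta_{t+1},\theta_{\min}\}$, $\gamma_{t+1}=p\theta_{t+1}\Gamma_t/(1-p\theta_{t+1})$, $\Gamma_{t+1}=\Gamma_t+\gamma_{t+1}$; $y^{t+1}=\theta_{t+1}w^t+(1-\theta_{t+1})z^t$; $m_i^{t,y}=\mathcal C_i^{D,y}(\nabla f_i(y^{t+1})-h_i^t)$; $g^{t+1}=h^t+\frac1n\sum_im_i^{t,y}$; $u^{t+1}=\arg\min_x\{\langle g^{t+1},x\rangle+\frac{\bar L+\Gamma_t\mu}{2\gamma_{t+1}}\|x-u^t\|^2+\frac\mu2\|x-y^{t+1}\|^2\}$; $q^{t+1}=\arg\min_x\{\langle k^t,x\rangle+\frac{\bar L+\Gamma_t\mu}{2\gamma_{t+1}}\|x-w^t\|^2+\frac\mu2\|x-y^{t+1}\|^2\}$; $w^{t+1}=q^{t+1}+\mathcal C^P(u^{t+1}-q^{t+1})$; $x^{t+1}=\theta_{t+1}u^{t+1}+(1-\theta_{t+1})z^t$; draw $c^t\sim\mathrm{Bernoulli}(p)$, and set $(k^{t+1},z^{t+1})=(v^t,x^{t+1})$ if $c^t=1$, $(k^{t+1},z^{t+1})=(k^t,z^t)$ if $c^t=0$; $m_i^{t,z}=\mathcal C_i^{D,z}(\nabla f_i(z^{t+1})-h_i^t)$; $h_i^{t+1}=h_i^t+\beta m_i^{t,z}$; $v^{t+1}=(1-\tau)v^t+\tau(h^t+\frac1n\sum_im_i^{t,z})$;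 $h^{t+1}=h^t+\frac\beta n\sum_im_i^{t,z}$. $\mathbb E_t$ denotes conditional expectation given the randomness of the first $t$ iterations. *)

(* Defs.v *)
From HB Require Import structures.
From mathcomp Require Import all_boot all_order all_algebra.
From mathcomp Require Import all_classical all_reals all_analysis.
Set Implicit Arguments. Unset Strict Implicit. Unset Printing Implicit Defensive.
Import Order.TTheory GRing.Theory Num.Theory.
Import numFieldNormedType.Exports.
Local Open Scope ring_scope.

Section Defs.
Context {R : realType} {d : nat}.

Definition vec := 'rV[R]_d.

Definition dot (u v : vec) : R := \sum_(j < d) u ord0 j * v ord0 j.
Definition sqn (u : vec) : R := dot u u.
Definition enorm (u : vec) : R := Num.sqrt (sqn u).

Definition is_gradient (F : vec -> R) (G : vec -> vec) : Prop :=
  forall x, differentiable F x /\ forall v : vec, 'D_v F x = dot (G x) v.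

Definition smooth (Lc : R) (F : vec -> R) (G : vec -> vec) : Prop :=
  is_gradient F G /\ forall x y, enorm (G x - G y) <= Lc * enorm (x - y).

Definition convex_fun (F : vec -> R) : Prop :=
  forall (x y : vec) (t : R), 0 <= t <= 1 ->
    F (t *: x + (1 - t) *: y) <= t * F x + (1 - t) * F y.

Definition strongly_convex (mu : R) (F : vec -> R) : Prop :=
  forall (x y : vec) (t : R), 0 <= t <= 1 ->
    F (t *: x + (1 - t) *: y)
      <= t * F x + (1 - t) * F y - mu / 2 * t * (1 - t) * sqn (x - y).

Definition avgf n (fs : 'I_n -> vec -> R) (x : vec) : R :=
  n%:R^-1 * \sum_(i < n) fs i x.
Definition avgv n (gs : 'I_n -> vec -> vec) (x : vec) : vec :=
  n%:R^-1 *: \sum_(i < n) gs i x.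

Definition bregman (F : vec -> R) (G : vec -> vec) (x y : vec) : R :=
  F x - F y - dot (G y) (x - y).

Definition unbiased_compressor (dT : measure_display) (T : measurableType dT)
    (omega : R) (P : probability T R) (C : T -> vec -> vec) : Prop :=
  (forall x j, measurable_fun setT (fun xi => C xi x ord0 j)) /\
  (forall x j, P.-integrable setT (fun xi => (C xi x ord0 j)%:E)) /\
  (forall x j, (\int[P]_xi (C xi x ord0 j)%:E = (x ord0 j)%:E)%E) /\
  (forall x, (\int[P]_xi (sqn (C xi x - x))%:E <= (omega * sqn x)%:E)%E).

Definition biased_compressor (dT : measure_display) (T : measurableType dT)
    (alpha : R) (P : probability T R) (C : T -> vec -> vec) : Prop :=
  (forall x j, measurable_fun setT (fun xi => C xi x ord0 j)) /\
  (forall x, (\int[P]_xi (sqn (C xi x - x))%:E <= ((1 - alpha) * sqn x)%:E)%E).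

(* objective of the prox steps defining u^{t+1} and q^{t+1} *)
Definition prox_obj (a gam mu : R) (g center y x : vec) : R :=
  dot g x + a / (2 * gam) * sqn (x - center) + mu / 2 * sqn (x - y).

End Defs.

(* expectation over n independent samples xi_i ~ P_i (product measure,
   realized as iterated integral) *)
Definition fam0 (T : Type) : 'I_0 -> T :=
  fun i => False_rect T (ltac:(by case: i)).

Definition fcons (T : Type) n (x : T) (g : 'I_n -> T) : 'I_n.+1 -> T :=
  fun i => match unlift ord0 i with Some j => g j | None => x end.

Fixpoint iterE {R : realType} (dT : measure_display) (T : measurableType dT) (n : nat) :
    ('I_n -> probability T R) -> (('I_n -> T) -> \bar R) -> \bar R :=
  match n with
  | 0 => fun _ F => F (fam0 T)
  | n'.+1 => fun Ps F =>
      (\int[Ps ord0]_x iterE (fun i => Ps (lift ord0 i)) (fun g => F (fcons x g)))%E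
  end.

Definition bernE {R : realType} (p : R) (F : bool -> \bar R) : \bar R :=
  (p%:E * F true + (1 - p)%:E * F false)%E.

(* Main.v *)
Require Import Defs.
From HB Require Import structures.
From mathcomp Require Import all_boot all_order all_algebra.
From mathcomp Require Import all_classical all_reals all_analysis.
From mathcomp Require Import measurable_realfun.
From mathcomp Require Import ring lra.
Import Order.TTheory GRing.Theory Num.Theory.
Import numFieldNormedType.Exports.
Local Open Scope ring_scope.

Section LowerInt.
Local Open Scope ereal_scope.
Context d (T : measurableType d) (R : realType).
Lemma le_int_nn (mu : {measure set T -> \bar R}) (f1 f2 : T -> \bar R) : (forall x, 0 <= f1 x) -> (forall x, f1 x <= f2 x) ->
  \int[mu]_x f1 x <= \int[mu]_x f2 x.
Proof.
move=> f10 f12.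
have f20 : forall x, 0 <= f2 x by move=> x; exact: le_trans (f10 x) (f12 x).
rewrite !ge0_integralTE //.
apply: ereal_sup_le => _ [h /= hf <-]; exists h => //= x.
exact: le_trans (hf x) (f12 x).
Qed.

Lemma probT (P : probability T R) :
  (P : {measure set T -> \bar R}) setT = 1.
Proof. exact: probability_setT. Qed.

Import HBNNSimple.

Lemma int_affine (P : probability T R) (a c : R) (psi : T -> \bar R) :
  (0 <= a)%R -> (0 <= c)%R -> (forall x, 0 <= psi x) ->
  \int[P]_x (a%:E + c%:E * psi x) <= a%:E + c%:E * \int[P]_x psi x.
Proof.
move=> a0 c0 psi0.
have [->|cne0] := eqVneq c 0%R.
  under eq_integral do rewrite mul0e adde0.
  by rewrite mul0e adde0 integral_cst // probT mule1.
have cgt0 : (0 < c)%R by rewrite lt_neqAle eq_sym cne0 c0.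
have ge0 : forall x, 0 <= a%:E + c%:E * psi x.
  by move=> x; apply: adde_ge0; [rewrite lee_fin|apply: mule_ge0; rewrite ?lee_fin].
rewrite ge0_integralTE //.
apply: ub_ereal_sup => _ [h /= hf <-].
pose g x := (Num.max (h x - a) 0 / c)%R.
have mh : measurable_fun setT (h : T -> R) by exact: measurable_funPT.
have mg : measurable_fun setT g.
  apply: measurable_funM => //; apply: measurable_maxr => //.
  by apply: measurable_funB.
have g0 x : (0 <= g x)%R by rewrite /g divr_ge0 // le_max lexx orbT.
have -> : sintegral P h = \int[P]_x (h x)%:E by rewrite integral_nnsfun // patch_setT.
apply: (@le_trans _ _ (\int[P]_x (a%:E + c%:E * (g x)%:E))%E).
  apply: ge0_le_integral => //.
  - by move=> x _; rewrite lee_fin.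
  - exact/measurable_EFinP.
  - apply: emeasurable_funD => //; apply: emeasurable_funM => //.
    exact/measurable_EFinP.
  - move=> x _; rewrite -EFinM -EFinD lee_fin.
    rewrite /g mulrCA divff ?mulr1 // -lerBlDl le_max lexx //.
rewrite ge0_integralD //; first last.
  - apply: emeasurable_funM => //; exact/measurable_EFinP.
  - by move=> x _; apply: mule_ge0; rewrite lee_fin.
rewrite integral_cst // probT mule1 leeD2l //.
rewrite ge0_integralZl_EFin //; first last.
  - exact/measurable_EFinP.
  - by move=> x _; rewrite lee_fin.
apply: lee_wpmul2l; first by rewrite lee_fin.
apply: le_int_nn => x; first by rewrite lee_fin.
move: (hf x) (psi0 x); rewrite /g.
case: (psi x) => [r| |] //= hr r0; rewrite ?leey // lee_fin ler_pdivrMr // mulrC.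
rewrite ge_max; apply/andP; split; last by rewrite mulr_ge0 // -lee_fin.
by rewrite lerBlDl; move: hr; rewrite -EFinM -EFinD lee_fin.
Qed.
End LowerInt.


Section IterE.
Local Open Scope ereal_scope.
Context d (T : measurableType d) (R : realType).

Lemma iterE_ge0 n (Ps : 'I_n -> probability T R) (F : ('I_n -> T) -> \bar R) :
  (forall g, 0 <= F g) -> 0 <= iterE Ps F.
Proof.
elim: n Ps F => [|n IH] Ps F F0 /=; first exact: F0.
by apply: integral_ge0 => x _; apply: IH.
Qed.

Lemma iterE_le n (Ps : 'I_n -> probability T R) (F1 F2 : ('I_n -> T) -> \bar R) :
  (forall g, 0 <= F1 g) -> (forall g, F1 g <= F2 g) -> iterE Ps F1 <= iterE Ps F2.
Proof.
elim: n Ps F1 F2 => [|n IH] Ps F1 F2 F10 F12 /=; first exact: F12.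
apply: le_int_nn => x; first by apply: iterE_ge0.
by apply: IH.
Qed.

Lemma iterE_cst n (Ps : 'I_n -> probability T R) (k : \bar R) :
  iterE Ps (fun _ => k) = k.
Proof.
elim: n Ps k => [|n IH] Ps k //=.
under eq_integral do rewrite IH.
by rewrite integral_cst // probT mule1.
Qed.

Lemma iterE_affine n (Ps : 'I_n -> probability T R) (a c : R) (F : ('I_n -> T) -> \bar R) :
  (0 <= a)%R -> (0 <= c)%R -> (forall g, 0 <= F g) ->
  iterE Ps (fun g => a%:E + c%:E * F g) <= a%:E + c%:E * iterE Ps F.
Proof.
move=> a0 c0; elim: n Ps F => [|n IH] Ps F F0 //=.
apply: le_trans; last apply: int_affine => //; last by move=> x; apply: iterE_ge0.
apply: le_int_nn => x.
  apply: iterE_ge0 => g; apply: adde_ge0; first by rewrite lee_fin.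
  by apply: mule_ge0; rewrite ?lee_fin.
exact: IH.
Qed.
End IterE.


Section Vec.
Context {R : realType} {d : nat}.
Local Notation vec := (@vec R d).
Implicit Types u v w : vec.

Lemma dotC u v : dot u v = dot v u.
Proof. by apply: eq_bigr => j _; rewrite mulrC. Qed.
Lemma dotDl u v w : dot (u + v) w = dot u w + dot v w.
Proof. by rewrite /dot -big_split; apply: eq_bigr => j _; rewrite !mxE mulrDl. Qed.
Lemma dotDr u v w : dot w (u + v) = dot w u + dot w v.
Proof. by rewrite dotC dotDl !(dotC w). Qed.
Lemma dotZl k u v : dot (k *: u) v = k * dot u v.
Proof. by rewrite /dot mulr_sumr; apply: eq_bigr => j _; rewrite !mxE mulrA. Qed.
Lemma dotZr k u v : dot u (k *: v) = k * dot u v.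
Proof. by rewrite dotC dotZl dotC. Qed.
Lemma dotNl u v : dot (- u) v = - dot u v.
Proof. by rewrite -scaleN1r dotZl mulN1r. Qed.
Lemma dotNr u v : dot u (- v) = - dot u v.
Proof. by rewrite dotC dotNl dotC. Qed.
Lemma dotBl u v w : dot (u - v) w = dot u w - dot v w.
Proof. by rewrite dotDl dotNl. Qed.
Lemma dotBr u v w : dot w (u - v) = dot w u - dot w v.
Proof. by rewrite dotDr dotNr. Qed.
Lemma dot0l u : dot 0 u = 0.
Proof. by rewrite /dot big1 // => j _; rewrite mxE mul0r. Qed.
Lemma dot0r u : dot u 0 = 0.
Proof. by rewrite dotC dot0l. Qed.
Lemma dot_suml n (F : 'I_n -> vec) v : dot (\sum_(i < n) F i) v = \sum_(i < n) dot (F i) v.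
Proof.
elim/big_ind2: _ => //; first by rewrite dot0l.
by move=> x1 x2 y1 y2 <- <-; rewrite dotDl.
Qed.

Lemma sqn_ge0 u : 0 <= sqn u.
Proof. by apply: sumr_ge0 => j _; rewrite -expr2 sqr_ge0. Qed.
Lemma sqnD u v : sqn (u + v) = sqn u + 2 * dot u v + sqn v.
Proof. rewrite /sqn dotDl !dotDr (dotC v u); ring. Qed.
Lemma sqnB u v : sqn (u - v) = sqn u - 2 * dot u v + sqn v.
Proof. rewrite /sqn dotBl !dotBr (dotC v u); ring. Qed.
Lemma sqnZ k u : sqn (k *: u) = k ^+ 2 * sqn u.
Proof. by rewrite /sqn dotZl dotZr mulrA expr2. Qed.
Lemma sqnN u : sqn (- u) = sqn u.
Proof. by rewrite /sqn dotNl dotNr opprK. Qed.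
Lemma sqn_sym u v : sqn (u - v) = sqn (v - u).
Proof. by rewrite -sqnN opprB. Qed.
Lemma sqn0 : sqn (0 : vec) = 0.
Proof. by rewrite /sqn dot0l. Qed.
Lemma sqn_eq0 u : sqn u = 0 -> u = 0.
Proof.
move=> /eqP; rewrite /sqn /dot psumr_eq0; last by move=> j _; rewrite -expr2 sqr_ge0.
move=> /allP H; apply/rowP => j; rewrite [RHS]mxE.
have := H j (mem_index_enum j); rewrite /= mulf_eq0 orbb => /eqP.
by rewrite (ord1 0).
Qed.

Lemma enorm_ge0 u : 0 <= enorm u.
Proof. exact: sqrtr_ge0. Qed.
Lemma enorm_sq u : enorm u ^+ 2 = sqn u.
Proof. by rewrite sqr_sqrtr // sqn_ge0. Qed.
Lemma enormZ k u : enorm (k *: u) = `|k| * enorm u.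
Proof. by rewrite /enorm sqnZ sqrtrM ?sqr_ge0 // sqrtr_sqr. Qed.

Lemma CS u v : dot u v <= enorm u * enorm v.
Proof.
set a := enorm v; set b := enorm u.
have H : 0 <= sqn (a *: u - b *: v) by exact: sqn_ge0.
rewrite sqnB !sqnZ dotZl dotZr -!enorm_sq -/a -/b in H.
have a0 : 0 <= a by exact: enorm_ge0.
have b0 : 0 <= b by exact: enorm_ge0.
have [ab0|abne0] := eqVneq (b * a) 0.
  rewrite ab0; move/eqP: ab0; rewrite mulf_eq0 => /orP[/eqP|/eqP] z.
    have : sqn u = 0 by rewrite -enorm_sq -/b z expr0n.
    by move/sqn_eq0 ->; rewrite dot0l.
  have : sqn v = 0 by rewrite -enorm_sq -/a z expr0n.
  by move/sqn_eq0 ->; rewrite dot0r.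
have abp : 0 < b * a by rewrite lt_neqAle eq_sym abne0 mulr_ge0.
have : 0 <= (b * a) * (2 * (b * a - dot u v)) by lra.
by rewrite pmulr_rge0 // => ?; lra.
Qed.

Lemma sqn_young u v s : 0 < s -> sqn (u + v) <= (1 + s) * sqn u + (1 + s^-1) * sqn v.
Proof.
move=> s0; rewrite sqnD.
have H : 0 <= sqn (s *: u - v) by exact: sqn_ge0.
rewrite sqnB sqnZ dotZl in H.
have E : s * (s * sqn u + s^-1 * sqn v - 2 * dot u v) = s ^+ 2 * sqn u - 2 * (s * dot u v) + sqn v.
  by field; rewrite gt_eqF.
have : 0 <= s * (s * sqn u + s^-1 * sqn v - 2 * dot u v) by rewrite E.
rewrite pmulr_rge0 // => ?.
lra.
Qed.

Lemma sqn_2 u v : sqn (u + v) <= 2 * sqn u + 2 * sqn v.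
Proof.
have := @sqn_young u v 1 ltr01; rewrite invr1.
by have -> : (1 + 1 : R) = 2 by [].
Qed.

End Vec.


Section Ana.
Context {R : realType} {d : nat}.
Local Notation vec := (@vec R d).
Variables (F : vec -> R) (G : vec -> vec).
Hypothesis HG : is_gradient F G.

Lemma line_der (x v : vec) (t : R) :
  derivable (fun s : R => F (x + s *: v)) t 1 /\
  'D_1 (fun s : R => F (x + s *: v)) t = dot (G (x + t *: v)) v.
Proof.
have E : (fun h : R => h^-1 *: (((fun s : R => F (x + s *: v)) \o shift t) (h *: 1) - F (x + t *: v)))
  = (fun h : R => h^-1 *: ((F \o shift (x + t *: v)) (h *: v) - F (x + t *: v))).
  apply/funext => h /=; congr (_ *: (F _ - _)).
  by rewrite [h%:A]mulr1 scalerDl addrCA addrA.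
have [dF DF] := HG (x + t *: v).
split; first by rewrite /derivable E; exact: diff_derivable.
by rewrite /derive E -DF.
Qed.

Lemma grad_ineq (x w : vec) : convex_fun F -> F x + dot (G x) (w - x) <= F w.
Proof.
move=> cF.
set v := w - x.
have [dg Dg] := line_der x v 0.
rewrite scale0r addr0 in Dg.
rewrite -Dg -lerBrDl.
rewrite /derive; apply: limr_le; first exact: dg.
near=> h.
have hne : h != 0 by near: h; exact: nbhs_dnbhs_neq.
have hlt : `|h| < 1 by near: h; apply: nbhs_dnbhs; apply/nbhs_ballP; exists 1 => //= z; rewrite /ball /= sub0r normrN.
rewrite /= [h%:A]mulr1 addr0 scale0r addr0.
change (h^-1 * (F (x + h *: v) - F x) <= F w - F x).
have [hgt0|hle0] := ltP 0 h.
  have := cF w x h; rewrite ltW //= ltW; last by move: hlt; rewrite gtr0_norm.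
  have -> : h *: w + (1 - h) *: x = x + h *: v.
    by apply/rowP => j; rewrite /v !mxE; ring.
  by move=> /(_ isT) H; rewrite ler_pdivrMl //; lra.
have hlt0 : h < 0 by rewrite lt_neqAle hne.
have h1 : 0 < 1 - h by lra.
set l := (1 - h)^-1.
have l0 : 0 <= l by rewrite invr_ge0 ltW.
have l1 : l <= 1 by rewrite invf_le1 //; lra.
have := cF (x + h *: v) w l; rewrite l0 l1 => /(_ isT).
have -> : l *: (x + h *: v) + (1 - l) *: w = x.
  apply/rowP => j; rewrite /v /l !mxE; field; lra.
move=> H.
have H2 : (1 - h) * F x <= (1 - h) * (l * F (x + h *: v) + (1 - l) * F w).
  by rewrite ler_pM2l.
have E : (1 - h) * (l * F (x + h *: v) + (1 - l) * F w) = F (x + h *: v) - h * F w.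
  rewrite /l; field; lra.
rewrite E in H2.
rewrite ler_ndivrMl //; lra.
Unshelve. all: by end_near.
Qed.

Lemma descent (Lc : R) (y w : vec) : (forall a b, enorm (G a - G b) <= Lc * enorm (a - b)) ->
  F w <= F y + dot (G y) (w - y) + Lc / 2 * sqn (w - y).
Proof.
move=> sm.
set v := w - y.
set g := fun s : R => F (y + s *: v).
set k1 := dot (G y) v.
set k2 := Lc / 2 * sqn v.
set phi := (g - k1 *: id - k2 *: (id ^+ 2) : R -> R).
have Dphi : forall t : R, is_derive t (1:R) phi (dot (G (y + t *: v)) v - k1 - k2 * (2 * t)).
  move=> t.
  have [dg Dg] := line_der y v t.
  have D1 : is_derive t 1 g (dot (G (y + t *: v)) v) by rewrite -Dg; exact: derivableP.
  apply: is_derive_eq.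
  change (dot (G (y + t *: v)) v - k1 * 1 - k2 * ((2 * t ^+ 1) * 1) = dot (G (y + t *: v)) v - k1 - k2 * (2 * t)).
  by rewrite expr1; ring.
have [c c01 Hc] := @MVT R phi (fun t => dot (G (y + t *: v)) v - k1 - k2 * (2 * t)) 0 1 ltr01 (fun t _ => Dphi t)
  (derivable_within_continuous (fun t _ => @ex_derive _ _ _ _ _ _ _ (Dphi t))).
move: Hc.
change (F (y + 1 *: v) - k1 * 1 - k2 * (1 ^+ 2) - (F (y + 0 *: v) - k1 * 0 - k2 * (0 ^+ 2)) =
  (dot (G (y + c *: v)) v - k1 - k2 * (2 * c)) * (1 - 0) -> F w <= F y + k1 + k2).
rewrite scale1r scale0r addr0 /v (addrC y) subrK -/v.
have c0 : 0 < c by move: c01; rewrite in_itv /= => /andP[].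
have B : dot (G (y + c *: v)) v - k1 <= Lc * c * sqn v.
  rewrite /k1 -dotBl; apply: le_trans (CS _ _) _.
  have := sm (y + c *: v) y; rewrite (addrC y) addrK enormZ gtr0_norm // => H.
  apply: le_trans (ler_wpM2r (enorm_ge0 v) H) _.
  by rewrite -enorm_sq expr2 !mulrA.
move=> E.
have : F w - k1 * 1 - k2 * 1 ^+ 2 - (F y - k1 * 0 - k2 * 0 ^+ 2) <= 0.
  rewrite E subr0 mulr1 /k2; lra.
rewrite expr1n expr0n /= !mulr1 !mulr0; lra.
Qed.

Lemma bregman_ge0 (x y : vec) : convex_fun F -> 0 <= bregman F G x y.
Proof. by move=> cF; have := grad_ineq y x cF; rewrite /bregman; lra. Qed.

Lemma cocoercive (Lc : R) (x y : vec) : convex_fun F ->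
  (forall a b, enorm (G a - G b) <= Lc * enorm (a - b)) ->
  sqn (G x - G y) <= 2 * Lc * bregman F G x y.
Proof.
move=> cF sm.
set g := G x - G y.
have [Lp|Ln] := ltP 0 Lc.
  set il := Lc^-1.
  set w := x + (- il) *: g.
  have h1 := grad_ineq y w cF.
  have h2 := descent Lc x w sm.
  have e1 : w - x = (- il) *: g by rewrite /w addrC addKr.
  have e2 : w - y = (x - y) + (- il) *: g by rewrite /w addrAC.
  rewrite e1 e2 dotDr !dotZr sqnZ in h1 h2.
  have E : dot (G x) g - dot (G y) g = sqn g by rewrite -dotBl.
  have E' : il * dot (G x) g - il * dot (G y) g = il * sqn g by rewrite -mulrBr E.
  have K : il * sqn g - Lc / 2 * (- il) ^+ 2 * sqn g <= bregman F G x y.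
    rewrite /bregman; lra.
  have E2 : Lc / 2 * (- il) ^+ 2 = il / 2 by rewrite /il; field; rewrite gt_eqF.
  rewrite E2 in K.
  have E3 : sqn g = 2 * Lc * (il * sqn g - il / 2 * sqn g) by rewrite /il; field; rewrite gt_eqF.
  rewrite E3; apply: ler_wpM2l => //; lra.
have hg : enorm g <= 0 by apply: le_trans (sm x y) _; rewrite mulr_le0_ge0 // enorm_ge0.
have eg : enorm g = 0 by apply/eqP; rewrite eq_le hg enorm_ge0.
have sg : sqn g = 0 by rewrite -enorm_sq eg expr0n.
rewrite sg.
have [->|Lneg] := eqVneq Lc 0; first by rewrite mulr0 mul0r.
have Lneg' : Lc < 0 by rewrite lt_neqAle Lneg.
have : enorm (x - y) <= 0.
  have := le_trans (enorm_ge0 g) (sm x y).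
  by rewrite nmulr_rge0.
move=> exy.
have exy0 : enorm (x - y) = 0 by apply/eqP; rewrite eq_le exy enorm_ge0.
have : sqn (x - y) = 0 by rewrite -enorm_sq exy0 expr0n.
move=> /sqn_eq0 /eqP; rewrite subr_eq0 => /eqP ->.
by rewrite /bregman !subrr dot0r subrr mulr0.
Qed.
End Ana.

Section OneStep.
Context {R : realType} {d : nat} (dT : measure_display) (T : measurableType dT).
Local Notation vec := (@vec R d).
Variables (P : probability T R) (C : T -> vec -> vec) (omega : R).
Hypothesis hC : unbiased_compressor omega P C.

Lemma dotE (u v : vec) : (dot u v)%:E = (\sum_(j < d) (u ord0 j)%:E * (v ord0 j)%:E)%E.
Proof. by rewrite /dot -sumEFin; apply: eq_bigr => j _; rewrite EFinM. Qed.

Lemma int_dot (m a : vec) :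
  P.-integrable setT (fun x => (dot m (C x a))%:E) /\
  (\int[P]_x (dot m (C x a))%:E = (dot m a)%:E)%E.
Proof.
case: hC => [mC [iC [eC vC]]].
have E : (fun x => (dot m (C x a))%:E) = (fun x => \sum_(j < d) (m ord0 j)%:E * (C x a ord0 j)%:E)%E.
  by apply/funext => x; rewrite dotE.
have ij : forall j : 'I_d, P.-integrable setT (fun x => ((m ord0 j)%:E * (C x a ord0 j)%:E)%E).
  by move=> j; apply: integrableZl => //; exact: iC.
rewrite E; split; first by apply: integrable_sum => // j _; exact: ij.
rewrite integral_sum //.
rewrite dotE; apply: eq_bigr => j _.
by rewrite integralZl // eC.
Qed.

Lemma mes_sqn (a : vec) : measurable_fun setT (fun x => sqn (C x a - a)).
Proof.
case: hC => [mC [iC [eC vC]]].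
have E : (fun x => sqn (C x a - a)) =
  (fun x => \sum_(j <- index_enum 'I_d) ((fun j x => (C x a ord0 j - a ord0 j) * (C x a ord0 j - a ord0 j)) j x)).
  by apply/funext => x; rewrite /sqn /dot; apply: eq_bigr => j _; rewrite !mxE.
rewrite E; apply: measurable_sum => j.
by apply: measurable_funM; apply: measurable_funB => //.
Qed.

Lemma one_step (a m : vec) (s K : R) :
  (\int[P]_x ((sqn (m + s *: (C x a - a)) + K)%:E) <= (sqn m + s^+2 * (omega * sqn a) + K)%:E)%E.
Proof.
have hC' := hC; case: hC' => [mC [iC [eC vC]]].
have [idot edot] := int_dot m a.
have iq : P.-integrable setT (fun x => (sqn (C x a - a))%:E).
  apply/integrableP; split; first exact/measurable_EFinP/mes_sqn.
  under eq_integral do rewrite gee0_abs ?lee_fin ?sqn_ge0 //.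
  by apply: le_lt_trans (vC a) _; exact: ltry.
set al := sqn m + K - 2 * s * dot m a.
have E : forall x, (sqn (m + s *: (C x a - a)) + K)%:E =
   ((al%:E + (2 * s)%:E * (dot m (C x a))%:E) + (s ^+ 2)%:E * (sqn (C x a - a))%:E)%E.
  move=> x; rewrite -!EFinM -!EFinD; congr (_%:E).
  by rewrite sqnD sqnZ dotZr dotBr /al; ring.
under eq_integral do rewrite E.
rewrite integralD //; first last.
- exact: integrableZl.
- apply: integrableD => //; last exact: integrableZl.
  exact: finite_measure_integrable_cst.
rewrite integralD //; first last.
- exact: integrableZl.
- exact: finite_measure_integrable_cst.
rewrite integral_cst // probT mule1 integralZl // edot integralZl //.
rewrite -EFinM -EFinD.
apply: (@le_trans _ _ ((sqn m + K)%:E + (s ^+ 2)%:E * (omega * sqn a)%:E)%E).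
  have -> : al + 2 * s * dot m a = sqn m + K by rewrite /al; ring.
  apply: leeD2l; apply: lee_wpmul2l; first by rewrite lee_fin sqr_ge0.
  exact: vC.
by rewrite -EFinM -EFinD lee_fin; lra.
Qed.
End OneStep.

Section VarIter.
Context {R : realType} {d : nat} (dT : measure_display) (T : measurableType dT).
Local Notation vec := (@vec R d).
Variable (omega : R).
Hypothesis om0 : 0 <= omega.

Lemma fcons0 (U : Type) n (x : U) (g : 'I_n -> U) : fcons x g ord0 = x.
Proof. by rewrite /fcons unlift_none. Qed.
Lemma fconsS (U : Type) n (x : U) (g : 'I_n -> U) j : fcons x g (lift ord0 j) = g j.
Proof. by rewrite /fcons liftK. Qed.

Lemma var_iter k (Ps : 'I_k -> probability T R) (C : 'I_k -> T -> vec -> vec)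
  (a : 'I_k -> vec) (m : vec) (s K : R) :
  (forall i, unbiased_compressor omega (Ps i) (C i)) -> 0 <= K ->
  (iterE Ps (fun xi => (sqn (m + s *: \sum_(i < k) (C i (xi i) (a i) - a i)) + K)%:E)
    <= (sqn m + s ^+ 2 * (omega * \sum_(i < k) sqn (a i)) + K)%:E)%E.
Proof.
elim: k Ps C a m s K => [|k IH] Ps C a m s K hC K0 /=.
  by rewrite !big_ord0 scaler0 addr0 !mulr0 addr0.
have K'0 : 0 <= s ^+ 2 * (omega * \sum_(i < k) sqn (a (lift ord0 i))) + K.
  by rewrite addr_ge0 // mulr_ge0 ?sqr_ge0 // mulr_ge0 // sumr_ge0 // => i _; exact: sqn_ge0.
apply: (@le_trans _ _ (\int[Ps ord0]_x ((sqn (m + s *: (C ord0 x (a ord0) - a ord0))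
   + (s ^+ 2 * (omega * \sum_(i < k) sqn (a (lift ord0 i))) + K))%:E))%E).
  apply: le_int_nn => x.
    by apply: iterE_ge0 => g; rewrite lee_fin addr_ge0 // sqn_ge0.
  have := IH (fun i => Ps (lift ord0 i)) (fun i => C (lift ord0 i)) (fun i => a (lift ord0 i))
    (m + s *: (C ord0 x (a ord0) - a ord0)) s K (fun i => hC (lift ord0 i)) K0.
  move=> H; rewrite addrA; apply: le_trans H; apply: iterE_le => g.
    by rewrite lee_fin addr_ge0 // sqn_ge0.
  by rewrite big_ord_recl fcons0 scalerDr addrA; under eq_bigr do rewrite fconsS.
apply: le_trans; first exact: one_step.
by rewrite big_ord_recl lee_fin; lra.
Qed.
End VarIter.


Section Det.
Context {R : realType} {d : nat}.
Local Notation vec := (@vec R d).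

Lemma smooth_sq (G : vec -> vec) (Lc : R) a b :
  (forall a b, enorm (G a - G b) <= Lc * enorm (a - b)) ->
  sqn (G a - G b) <= Lc ^+ 2 * sqn (a - b).
Proof.
move=> sm; have H := sm a b; have H0 := enorm_ge0 (G a - G b).
rewrite -!enorm_sq -exprMn; nra.
Qed.

Lemma bregman_avg n (fs : 'I_n -> vec -> R) (gs : 'I_n -> vec -> vec) x y :
  bregman (avgf fs) (avgv gs) x y = n%:R^-1 * \sum_(i < n) bregman (fs i) (gs i) x y.
Proof.
rewrite /bregman /avgf /avgv dotZl dot_suml.
by rewrite -!mulrBr -!sumrB.
Qed.

Lemma sum_bound n (fs : 'I_n -> vec -> R) (gs : 'I_n -> vec -> vec) (Ls : 'I_n -> R)
  (Lmax Lhat : R) (hs : 'I_n -> vec) (xp y z : vec) :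
  (0 < n)%N ->
  (forall i, is_gradient (fs i) (gs i)) ->
  (forall i, forall a b, enorm (gs i a - gs i b) <= Ls i * enorm (a - b)) ->
  (forall i, convex_fun (fs i)) ->
  (forall i, Ls i <= Lmax) ->
  (forall x y : vec, n%:R^-1 * \sum_(i < n) sqn (gs i x - gs i y) <= Lhat ^+ 2 * sqn (x - y)) ->
  \sum_(i < n) sqn (gs i xp - hs i) <= 2 * \sum_(i < n) sqn (gs i z - hs i)
     + 4 * n%:R * Lhat ^+ 2 * sqn (xp - y)
     + 8 * Lmax * n%:R * bregman (avgf fs) (avgv gs) z y.
Proof.
move=> n0 HG Hsm Hc HL HLh.
have np : 0 < n%:R :> R by rewrite ltr0n.
have S1 : \sum_(i < n) sqn (gs i xp - hs i) <= \sum_(i < n)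
   (2 * sqn (gs i z - hs i) + (4 * sqn (gs i xp - gs i y) + 4 * sqn (gs i z - gs i y))).
  apply: ler_sum => i _.
  have e1 : gs i xp - hs i = (gs i z - hs i) + (gs i xp - gs i z).
    by apply/rowP => j; rewrite !mxE; ring.
  have e2 : gs i xp - gs i z = (gs i xp - gs i y) + (- (gs i z - gs i y)).
    by apply/rowP => j; rewrite !mxE; ring.
  rewrite e1; apply: le_trans (sqn_2 _ _) _.
  have := sqn_2 (gs i xp - gs i y) (- (gs i z - gs i y)); rewrite -e2 sqnN => H.
  lra.
apply: le_trans S1 _.
rewrite !big_split /= -!mulr_sumr.
have S2 : \sum_(i < n) sqn (gs i xp - gs i y) <= n%:R * (Lhat ^+ 2 * sqn (xp - y)).
  by rewrite -ler_pdivrMl.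
have S3 : \sum_(i < n) sqn (gs i z - gs i y) <= 2 * Lmax * (n%:R * bregman (avgf fs) (avgv gs) z y).
  rewrite bregman_avg (mulrA n%:R) mulfV ?gt_eqF // mul1r mulr_sumr.
  apply: ler_sum => i _.
  apply: le_trans (cocoercive (fs i) (gs i) (HG i) (Ls i) z y (Hc i) (Hsm i)) _.
  apply: ler_wpM2r; first exact: (bregman_ge0 (fs i) (gs i) (HG i) z y (Hc i)).
  by rewrite ler_pM2l // ltr0n.
lra.
Qed.
End Det.


Lemma key_arith {R : realType} (n : nat) (p tau omega L Lmax Lhat a2 W S1 Sxp e X D : R) :
  (0 < n)%N -> 0 < p <= 1 -> 0 < tau <= 1 -> 0 <= omega ->
  0 <= a2 -> 0 <= W -> 0 <= e ->
  Sxp <= (1 + tau / (2 * p)) * a2 + (1 + 2 * p / tau) * W ->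
  W <= 4 * L * D + 2 * L ^+ 2 * X ->
  S1 <= 2 * e + 4 * n%:R * Lhat ^+ 2 * X + 8 * Lmax * n%:R * D ->
  p * ((1 - tau) ^+ 2 * Sxp + (tau / n%:R) ^+ 2 * (omega * S1))
  + (1 - p) * ((1 - tau) ^+ 2 * a2 + (tau / n%:R) ^+ 2 * (omega * e))
  <= (1 - tau / 2) * a2 + 2 * tau ^+ 2 * omega / n%:R ^+ 2 * e
     + (4 * p * (1 + 2 * p / tau) * L + 8 * p * tau ^+ 2 * omega * Lmax / n%:R) * D
     + (2 * p * (1 + 2 * p / tau) * L ^+ 2 + 4 * p * tau ^+ 2 * omega * Lhat ^+ 2 / n%:R) * X.
Proof.
move=> n0 /andP[p0 p1] /andP[t0 t1] om0 a0 W0 e0 HS HW HS1.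
have np : 0 < n%:R :> R by rewrite ltr0n.
set q := (1 - tau) ^+ 2.
set r := (tau / n%:R) ^+ 2 * omega.
set c1 := 1 + 2 * p / tau.
set s0 := tau / (2 * p).
have q0 : 0 <= q by rewrite sqr_ge0.
have q1 : q <= 1 by rewrite /q; nra.
have r0 : 0 <= r by rewrite /r mulr_ge0 // sqr_ge0.
have c10 : 0 <= c1 by rewrite /c1 addr_ge0 // divr_ge0 // ?mulr_ge0 // ltW.
have st1 : q * Sxp <= q * (1 + s0) * a2 + c1 * (4 * L * D + 2 * L ^+ 2 * X).
  apply: le_trans (ler_wpM2l q0 HS) _.
  rewrite mulrDr mulrA -/s0 -/c1 lerD2l.
  apply: (@le_trans _ _ (c1 * W)).
    by rewrite mulrA ler_wpM2r // ?mulr_ge0 // ler_piMl.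
  exact: ler_wpM2l.
have st2 : r * S1 <= r * (2 * e + 4 * n%:R * Lhat ^+ 2 * X + 8 * Lmax * n%:R * D).
  exact: ler_wpM2l.
have M : p * ((1 - tau) ^+ 2 * Sxp + (tau / n%:R) ^+ 2 * (omega * S1))
  + (1 - p) * ((1 - tau) ^+ 2 * a2 + (tau / n%:R) ^+ 2 * (omega * e))
  <= p * (q * (1 + s0) * a2 + c1 * (4 * L * D + 2 * L ^+ 2 * X)
          + r * (2 * e + 4 * n%:R * Lhat ^+ 2 * X + 8 * Lmax * n%:R * D))
     + (1 - p) * (q * a2 + r * e).
  rewrite -/q (mulrA _ omega) -/r (mulrA _ omega e) -/r.
  apply: lerD; last exact: lexx.
  apply: ler_wpM2l; first exact: ltW.
  exact: lerD.
apply: le_trans M _.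
have E : (1 - tau / 2) * a2 + 2 * tau ^+ 2 * omega / n%:R ^+ 2 * e
     + (4 * p * (1 + 2 * p / tau) * L + 8 * p * tau ^+ 2 * omega * Lmax / n%:R) * D
     + (2 * p * (1 + 2 * p / tau) * L ^+ 2 + 4 * p * tau ^+ 2 * omega * Lhat ^+ 2 / n%:R) * X
  - (p * (q * (1 + s0) * a2 + c1 * (4 * L * D + 2 * L ^+ 2 * X)
          + r * (2 * e + 4 * n%:R * Lhat ^+ 2 * X + 8 * Lmax * n%:R * D))
     + (1 - p) * (q * a2 + r * e))
  = (1 - tau / 2 - q * (1 + tau / 2)) * a2 + (1 - p) * (r * e).
  rewrite /q /r /c1 /s0; field.
  by rewrite !gt_eqF // ?mulr_gt0.
rewrite -subr_ge0 E.
apply: addr_ge0; last by rewrite mulr_ge0 ?subr_ge0 // mulr_ge0.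
apply: mulr_ge0 => //.
rewrite /q; nra.
Qed.


Lemma sc_convex {R : realType} {d : nat} (mu : R) (F : @vec R d -> R) :
  0 <= mu -> strongly_convex mu F -> convex_fun F.
Proof.
move=> mu0 sc x y t /andP[t0 t1]; apply: le_trans (sc x y t _) _; first by rewrite t0 t1.
rewrite lerBlDr lerDl mulr_ge0 ?sqn_ge0 // mulr_ge0 ?subr_ge0 // mulr_ge0 // divr_ge0 //.
Qed.

Lemma aux (R : realType) (n d : nat) (dy dz dp : measure_display)
  (Ty : measurableType dy) (Tz : measurableType dz) (Tp : measurableType dp)
  (fs : 'I_n -> @vec R d -> R) (gs : 'I_n -> @vec R d -> @vec R d)
  (Ls : 'I_n -> R) (Lmax Lhat L mu omega p tau : R)
  (Py : 'I_n -> probability Ty R)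
  (Pz : 'I_n -> probability Tz R) (Cz : 'I_n -> Tz -> @vec R d -> @vec R d)
  (Pp : probability Tp R)
  (z v y : @vec R d) (hs : 'I_n -> @vec R d) (xnext : ('I_n -> Ty) -> @vec R d) :
  (0 < n)%N ->
  (forall i, smooth (Ls i) (fs i) (gs i)) ->
  (forall i, Ls i <= Lmax) ->
  (forall x y : @vec R d,
      n%:R^-1 * \sum_(i < n) sqn (gs i x - gs i y) <= Lhat ^+ 2 * sqn (x - y)) ->
  smooth L (avgf fs) (avgv gs) ->
  (forall i, convex_fun (fs i)) -> 0 <= mu -> strongly_convex mu (avgf fs) ->
  0 <= omega ->
  (forall i, unbiased_compressor omega (Pz i) (Cz i)) ->
  0 < p <= 1 -> 0 < tau <= 1 ->
  (iterE Py (fun xiy => \int[Pp]_xip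
      bernE p (fun c => iterE Pz (fun xiz =>
        (sqn ((1 - tau) *: v + tau *: (n%:R^-1 *: \sum_(i < n) hs i
           + n%:R^-1 *: \sum_(i < n) Cz i (xiz i) (gs i (if c then xnext xiy else z) - hs i))
          - avgv gs (if c then xnext xiy else z)))%:E)))
   <= ((1 - tau / 2) * sqn (v - avgv gs z)
       + 2 * tau ^+ 2 * omega / n%:R ^+ 2 * \sum_(i < n) sqn (hs i - gs i z)
       + (4 * p * (1 + 2 * p / tau) * L + 8 * p * tau ^+ 2 * omega * Lmax / n%:R)
           * bregman (avgf fs) (avgv gs) z y)%:E
      + (2 * p * (1 + 2 * p / tau) * L ^+ 2
           + 4 * p * tau ^+ 2 * omega * Lhat ^+ 2 / n%:R)%:E
        * iterE Py (fun xiy => \int[Pp]_xip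
      bernE p (fun c => iterE Pz (fun xiz => (sqn (xnext xiy - y))%:E))))%E.
Proof.
move=> n0 Hsm HLi HLhb HsmL Hcv Hmu Hsc Hom HCz Hp Htau.
have HGi : forall i, is_gradient (fs i) (gs i) := fun i => (Hsm i).1.
have Hsmi : forall i a b, enorm (gs i a - gs i b) <= Ls i * enorm (a - b) := fun i => (Hsm i).2.
have [HGf HsmF] := HsmL.
have cF : convex_fun (avgf fs) := @sc_convex _ _ mu _ Hmu Hsc.
have np : 0 < n%:R :> R by rewrite ltr0n.
have [p0 p1] := andP Hp.
have [t0 t1] := andP Htau.
set D := bregman (avgf fs) (avgv gs) z y.
set B := fun z' : @vec R d => (1 - tau) ^+ 2 * sqn (v - avgv gs z')
   + (tau / n%:R) ^+ 2 * (omega * \sum_(i < n) sqn (gs i z' - hs i)).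
set A := (1 - tau / 2) * sqn (v - avgv gs z)
       + 2 * tau ^+ 2 * omega / n%:R ^+ 2 * \sum_(i < n) sqn (hs i - gs i z)
       + (4 * p * (1 + 2 * p / tau) * L + 8 * p * tau ^+ 2 * omega * Lmax / n%:R) * D.
set c := 2 * p * (1 + 2 * p / tau) * L ^+ 2 + 4 * p * tau ^+ 2 * omega * Lhat ^+ 2 / n%:R.
have Key : forall xp, p * B xp + (1 - p) * B z <= A + c * sqn (xp - y).
  move=> xp.
  have He : \sum_(i < n) sqn (hs i - gs i z) = \sum_(i < n) sqn (gs i z - hs i).
    by apply: eq_bigr => i _; rewrite sqn_sym.
  rewrite /A /c He /B.
  apply: (@key_arith _ n p tau omega L Lmax Lhat _ (sqn (avgv gs z - avgv gs xp))) => //.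
  - exact: sqn_ge0.
  - exact: sqn_ge0.
  - by apply: sumr_ge0 => i _; exact: sqn_ge0.
  - have -> : v - avgv gs xp = (v - avgv gs z) + (avgv gs z - avgv gs xp).
      by apply/rowP => j; rewrite !mxE; ring.
    have s0 : 0 < tau / (2 * p) by rewrite divr_gt0 // mulr_gt0.
    have Y := sqn_young (v - avgv gs z) (avgv gs z - avgv gs xp) _ s0.
    by rewrite invf_div in Y.
  - have -> : avgv gs z - avgv gs xp = (avgv gs z - avgv gs y) + (avgv gs y - avgv gs xp).
      by apply/rowP => j; rewrite !mxE; ring.
    apply: le_trans (sqn_2 _ _) _.
    have h1 := cocoercive _ _ HGf L z y cF HsmF.
    have h2 := smooth_sq (avgv gs) L xp y HsmF.
    rewrite sqn_sym in h2.
    rewrite -/D in h1; lra.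
  - exact: sum_bound.
have B0 : forall z', 0 <= B z'.
  move=> z'; rewrite /B addr_ge0 // mulr_ge0 ?sqr_ge0 ?sqn_ge0 // mulr_ge0 //.
  by apply: sumr_ge0 => i _; exact: sqn_ge0.
have A0 : 0 <= A.
  have := Key y; rewrite subrr sqn0 mulr0 addr0; apply: le_trans.
  by rewrite addr_ge0 // mulr_ge0 // ?subr_ge0 // ltW.
have c0 : 0 <= c.
  have p0' := ltW p0; have t0' := ltW t0.
  have ti : 0 <= tau^-1 by rewrite invr_ge0.
  rewrite /c; repeat first [ exact: sqr_ge0 | exact: ler0n | exact: ler01 | assumption
     | apply: addr_ge0 | apply: divr_ge0 | apply: mulr_ge0 ].
have inner : forall (z' : @vec R d), (iterE Pz (fun xiz => (sqn ((1 - tau) *: v + tau *: (n%:R^-1 *: \sum_(i < n) hs i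
           + n%:R^-1 *: \sum_(i < n) Cz i (xiz i) (gs i z' - hs i)) - avgv gs z'))%:E) <= (B z')%:E)%E.
  move=> z'.
  have := @var_iter R d dz Tz omega Hom n Pz Cz (fun i => gs i z' - hs i)
     ((1 - tau) *: (v - avgv gs z')) (tau / n%:R) 0 HCz (lexx 0).
  rewrite sqnZ addr0 /B => H.
  apply: le_trans H; apply: iterE_le => xiz; first by rewrite lee_fin sqn_ge0.
  rewrite addr0 lee_fin le_eqVlt; apply/orP; left; apply/eqP; congr sqn.
  rewrite !sumrB /avgv.
  move: (\sum_(i < n) Cz i (xiz i) _) (\sum_(i < n) gs i z') (\sum_(i < n) hs i) => SC Sg Sh.
  apply/rowP => j; rewrite !mxE; field; exact: lt0r_neq0.
have inner2 : forall xiy, (\int[Pp]_xip bernE p (fun c0 => iterE Pz (fun xiz =>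
        (sqn ((1 - tau) *: v + tau *: (n%:R^-1 *: \sum_(i < n) hs i
           + n%:R^-1 *: \sum_(i < n) Cz i (xiz i) (gs i (if c0 then xnext xiy else z) - hs i))
          - avgv gs (if c0 then xnext xiy else z)))%:E))
     <= (A + c * sqn (xnext xiy - y))%:E)%E.
  move=> xiy.
  apply: (@le_trans _ _ (\int[Pp]_xip ((p * B (xnext xiy) + (1 - p) * B z)%:E))%E).
    apply: le_int_nn => xip.
      rewrite /bernE; apply: adde_ge0; apply: mule_ge0; rewrite ?lee_fin ?subr_ge0 ?(ltW p0) //;
        by apply: iterE_ge0 => g; rewrite lee_fin sqn_ge0.
    have hp : (0 <= p%:E)%E by rewrite lee_fin ltW.
    have hq : (0 <= (1 - p)%:E)%E by rewrite lee_fin subr_ge0.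
    rewrite /bernE.
    apply: le_trans (leeD (lee_wpmul2l hp (inner (xnext xiy))) (lee_wpmul2l hq (inner z))) _.
    by rewrite -!EFinM -EFinD.
  by rewrite integral_cst // probT mule1 lee_fin; exact: Key.
have RHS : iterE Py (fun xiy => \int[Pp]_xip bernE p (fun c0 => iterE Pz (fun xiz => (sqn (xnext xiy - y))%:E)))%E
   = iterE Py (fun xiy => (sqn (xnext xiy - y))%:E).
  congr (iterE Py _); apply/funext => xiy.
  rewrite iterE_cst /bernE -!EFinM -EFinD integral_cst // probT mule1; congr (_%:E); ring.
rewrite RHS.
apply: (@le_trans _ _ (iterE Py (fun xiy => A%:E + c%:E * (sqn (xnext xiy - y))%:E))%E).
  apply: iterE_le => xiy.
    apply: integral_ge0 => xip _.
    rewrite /bernE; apply: adde_ge0; apply: mule_ge0; rewrite ?lee_fin ?subr_ge0 ?(ltW p0) //;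
      by apply: iterE_ge0 => g; rewrite lee_fin sqn_ge0.
  by rewrite -EFinM -EFinD; exact: inner2.
apply: iterE_affine => // g; rewrite lee_fin; exact: sqn_ge0.
Qed.

Theorem lemma10 (R : realType) (n d : nat)
  (dy dz dp : measure_display)
  (Ty : measurableType dy) (Tz : measurableType dz) (Tp : measurableType dp)
  (fs : 'I_n -> @vec R d -> R) (gs : 'I_n -> @vec R d -> @vec R d)
  (Ls : 'I_n -> R) (Lmax Lhat L mu : R) (xstar : @vec R d)
  (omega alpha p tau Lbar Gamma : R)
  (Py : 'I_n -> probability Ty R) (Cy : 'I_n -> Ty -> @vec R d -> @vec R d)
  (Pz : 'I_n -> probability Tz R) (Cz : 'I_n -> Tz -> @vec R d -> @vec R d)
  (Pp : probability Tp R) (Cp : Tp -> @vec R d -> @vec R d)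
  (w z u v : @vec R d) (hs : 'I_n -> @vec R d)
  (thetabar : R) (Uf : @vec R d -> @vec R d) :
  (0 < n)%N ->
  (* Assumption 1 *)
  (forall i, smooth (Ls i) (fs i) (gs i)) ->
  (forall i, Ls i <= Lmax) -> (exists i, Ls i = Lmax) ->
  0 < Lhat ->
  (forall x y : @vec R d,
      n%:R^-1 * \sum_(i < n) sqn (gs i x - gs i y) <= Lhat ^+ 2 * sqn (x - y)) ->
  (* Assumption 2 *)
  smooth L (avgf fs) (avgv gs) ->
  (* Assumption 3 *)
  (forall i, convex_fun (fs i)) -> 0 <= mu -> strongly_convex mu (avgf fs) ->
  (forall x, avgf fs xstar <= avgf fs x) ->
  (* compressors; Assumption 4 is built into the product expectation Et below *)
  0 <= omega -> 0 < alpha <= 1 ->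
  (forall i, unbiased_compressor omega (Py i) (Cy i)) ->
  (forall i, unbiased_compressor omega (Pz i) (Cz i)) ->
  biased_compressor alpha Pp Cp ->
  (* parameters *)
  0 < Lbar -> 0 < p <= 1 -> 1 <= Gamma -> 0 < tau <= 1 ->
  let beta := (omega + 1)^-1 in
  let theta_min :=
    4^-1 * Num.min 1 (Num.min (alpha / p) (Num.min (tau / p) (beta / p))) in
  (* thetabar_{t+1} = largest root of the quadratic *)
  p * Lbar * Gamma * thetabar ^+ 2 + p * (Lbar + Gamma * mu) * thetabar
    - (Lbar + Gamma * mu) = 0 ->
  (forall r : R, p * Lbar * Gamma * r ^+ 2 + p * (Lbar + Gamma * mu) * r
    - (Lbar + Gamma * mu) = 0 -> r <= thetabar) ->
  let theta := Num.min thetabar theta_min in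
  let gam := p * theta * Gamma / (1 - p * theta) in
  let y := theta *: w + (1 - theta) *: z in
  let h := n%:R^-1 *: \sum_(i < n) hs i in
  (* u^{t+1} = argmin_x { <g, x> + (Lbar + Gamma mu)/(2 gam) |x - u|^2 + mu/2 |x - y|^2 } *)
  (forall g x : @vec R d,
     prox_obj (Lbar + Gamma * mu) gam mu g u y (Uf g)
       <= prox_obj (Lbar + Gamma * mu) gam mu g u y x) ->
  let xnext (xiy : 'I_n -> Ty) : @vec R d :=
    theta *: Uf (h + n%:R^-1 *: \sum_(i < n) Cy i (xiy i) (gs i y - hs i))
      + (1 - theta) *: z in
  let znext (xiy : 'I_n -> Ty) (c : bool) : @vec R d :=
    if c then xnext xiy else z in
  let vnext (xiy : 'I_n -> Ty) (c : bool) (xiz : 'I_n -> Tz) : @vec R d :=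
    (1 - tau) *: v
      + tau *: (h + n%:R^-1 *: \sum_(i < n) Cz i (xiz i) (gs i (znext xiy c) - hs i)) in
  let Et (F : ('I_n -> Ty) -> bool -> ('I_n -> Tz) -> \bar R) : \bar R :=
    iterE Py (fun xiy => \int[Pp]_xip
      bernE p (fun c => iterE Pz (fun xiz => F xiy c xiz)))%E in
  (Et (fun xiy c xiz => (sqn (vnext xiy c xiz - avgv gs (znext xiy c)))%:E)
   <= ((1 - tau / 2) * sqn (v - avgv gs z)
       + 2 * tau ^+ 2 * omega / n%:R ^+ 2 * \sum_(i < n) sqn (hs i - gs i z)
       + (4 * p * (1 + 2 * p / tau) * L + 8 * p * tau ^+ 2 * omega * Lmax / n%:R)
           * bregman (avgf fs) (avgv gs) z y)%:E
      + (2 * p * (1 + 2 * p / tau) * L ^+ 2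
           + 4 * p * tau ^+ 2 * omega * Lhat ^+ 2 / n%:R)%:E
        * Et (fun xiy _ _ => (sqn (xnext xiy - y))%:E))%E.
Proof.
move=> n0 Hsm HLi Hex HLh HLhb HsmL Hcv Hmu Hsc Hmin Hom Hal HCy HCz HCp HLbar Hp HGam Htau
  beta theta_min Hroot Hlarg theta gam y h HUf.
exact: (@aux R n d dy dz dp Ty Tz Tp fs gs Ls Lmax Lhat L mu omega p tau Py Pz Cz Pp z v y hs
  (fun xiy => theta *: Uf (h + n%:R^-1 *: \sum_(i < n) Cy i (xiy i) (gs i y - hs i)) + (1 - theta) *: z)
  n0 Hsm HLi HLhb HsmL Hcv Hmu Hsc Hom HCz Hp Htau).
Qed.
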